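(* Let $G$ be a locally finite quasi-transitive graph with infinitely many ends, and let $(T,\mathcal{X})$ be a canonical tree-decomposition of $G$ such that: every bag is a finite clique; for every adhesion set $X$ there is a unique edge $tt'\in E(T)$ with $X=X_t\cap X_{t'}$; and there is an end of $G$ which is stabilized by all automorphisms of $G$. Then $G$ does not have a periodic proper vertex-coloring.
   Context: A tree-decomposition of $G$ is a pair $(T,\mathcal{X})$ with $T$ a tree and $\mathcal{X}=(X_t)_{t\in V(T)}$ subsets (bags) of $V(G)$ covering $V(G)$, such that every edge has both endpoints in some bag and for each vertex $v$ the set $\{t: v\in X_t\}$ induces a connected subtree. Its adhesion sets are the sets $X_t\cap X_{t'}$ for $tt'\in E(T)$. It is canonical if $\mathrm{Aut}(G)$ acts by automorphisms on $T$ with $g(X_t)=X_{g\cdot t}$. Locally finite: all degrees finite; quasi-transitive: finitely many $\mathrm{Aut}(G)$-orbits on $V(G)$. Ends: equivalence classes of rays, two rays equivalent if joined by infinitely many disjoint paths. A vertex-coloring is periodic if the subgroup of color-preserving automorphisms has finitely many orbits on $V(G)$. *)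

(* Defs.v *)
From Stdlib Require Import List Arith.
Import ListNotations.
Set Implicit Arguments.

Definition simple_graph {V : Type} (adj : V -> V -> Prop) : Prop :=
  (forall u v, adj u v -> adj v u) /\ (forall v, ~ adj v v).

Fixpoint walk {V : Type} (adj : V -> V -> Prop) (p : list V) : Prop :=
  match p with
  | [] => True
  | x :: q => match q with
              | [] => True
              | y :: _ => adj x y /\ walk adj q
              end
  end.

Definition walk_from_to {V : Type} (adj : V -> V -> Prop) (p : list V) (x y : V) : Prop :=
  walk adj p /\ hd_error p = Some x /\ hd_error (rev p) = Some y.

Definition graph_connected {V : Type} (adj : V -> V -> Prop) : Prop :=
  forall u v, exists p, walk_from_to adj p u v.

Definition locally_finite {V : Type} (adj : V -> V -> Prop) : Prop :=
  forall v, exists l : list V, forall w, adj v w -> In w l.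

Definition is_aut {V : Type} (adj : V -> V -> Prop) (f : V -> V) : Prop :=
  (exists g : V -> V, (forall v, g (f v) = v) /\ (forall v, f (g v) = v)) /\
  (forall u v, adj u v <-> adj (f u) (f v)).

Definition quasi_transitive {V : Type} (adj : V -> V -> Prop) : Prop :=
  exists l : list V, forall v, exists f u, is_aut adj f /\ In u l /\ f u = v.

Definition has_cycle {N : Type} (tadj : N -> N -> Prop) : Prop :=
  exists (p : list N) x y, NoDup p /\ 3 <= length p /\ walk_from_to tadj p x y /\ tadj y x.

Definition is_tree {N : Type} (tadj : N -> N -> Prop) : Prop :=
  simple_graph tadj /\ graph_connected tadj /\ ~ has_cycle tadj.

Definition is_ray {V : Type} (adj : V -> V -> Prop) (r : nat -> V) : Prop :=
  (forall n m, r n = r m -> n = m) /\ (forall n, adj (r n) (r (S n))).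

Definition ray_path {V : Type} (adj : V -> V -> Prop) (r1 r2 : nat -> V) (p : list V) : Prop :=
  exists n m, walk_from_to adj p (r1 n) (r2 m).

Definition disjoint_lists {V : Type} (p q : list V) : Prop :=
  forall v, In v p -> ~ In v q.

Definition equiv_rays {V : Type} (adj : V -> V -> Prop) (r1 r2 : nat -> V) : Prop :=
  exists P : nat -> list V,
    (forall i, ray_path adj r1 r2 (P i)) /\
    (forall i j, i <> j -> disjoint_lists (P i) (P j)).

Definition infinitely_many_ends {V : Type} (adj : V -> V -> Prop) : Prop :=
  exists R : nat -> nat -> V,
    (forall i, is_ray adj (R i)) /\
    (forall i j, i <> j -> ~ equiv_rays adj (R i) (R j)).

Definition has_aut_invariant_end {V : Type} (adj : V -> V -> Prop) : Prop :=
  exists r, is_ray adj r /\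
    forall f, is_aut adj f -> equiv_rays adj (fun n => f (r n)) r.

(** Tree-decompositions: T given by node type N and adjacency tadj,
    bags X : N -> V -> Prop (X t v means v is in the bag X_t). *)
Definition is_tree_decomposition {V N : Type} (adj : V -> V -> Prop)
  (tadj : N -> N -> Prop) (X : N -> V -> Prop) : Prop :=
  is_tree tadj /\
  (forall v, exists t, X t v) /\
  (forall u v, adj u v -> exists t, X t u /\ X t v) /\
  (forall v t t', X t v -> X t' v ->
     exists p, walk_from_to tadj p t t' /\ forall s, In s p -> X s v).

Definition canonical_td {V N : Type} (adj : V -> V -> Prop)
  (tadj : N -> N -> Prop) (X : N -> V -> Prop) : Prop :=
  exists act : (V -> V) -> N -> N,
    (forall f, is_aut adj f -> is_aut tadj (act f)) /\
    (forall t, act (fun v => v) t = t) /\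
    (forall f h, is_aut adj f -> is_aut adj h ->
       forall t, act (fun v => f (h v)) t = act f (act h t)) /\
    (forall f, is_aut adj f -> forall t v,
       X (act f t) v <-> exists u, X t u /\ f u = v).

Definition bags_finite_cliques {V N : Type} (adj : V -> V -> Prop) (X : N -> V -> Prop) : Prop :=
  forall t, (exists l : list V, forall v, X t v -> In v l) /\
            (forall u v, X t u -> X t v -> u <> v -> adj u v).

Definition unique_adhesion_edges {V N : Type} (tadj : N -> N -> Prop) (X : N -> V -> Prop) : Prop :=
  forall t t' s s', tadj t t' -> tadj s s' ->
    (forall v, (X t v /\ X t' v) <-> (X s v /\ X s' v)) ->
    (s = t /\ s' = t') \/ (s = t' /\ s' = t).

Definition proper_coloring {V C : Type} (adj : V -> V -> Prop) (c : V -> C) : Prop :=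
  forall u v, adj u v -> c u <> c v.

Definition periodic_coloring {V C : Type} (adj : V -> V -> Prop) (c : V -> C) : Prop :=
  exists l : list V, forall v, exists f u,
    is_aut adj f /\ (forall w, c (f w) = c w) /\ In u l /\ f u = v.

(* Main.v *)
Require Import Defs.
From Stdlib Require Import List Arith Lia Classical ClassicalEpsilon FunctionalExtensionality.
Import ListNotations.
Set Implicit Arguments.

Lemma choice' {A B : Type} (P : A -> B -> Prop) :
  (forall a, exists b, P a b) -> exists f : A -> B, forall a, P a (f a).
Proof.
  intros H. exists (fun a => proj1_sig (constructive_indefinite_description _ (H a))).
  intro a. exact (proj2_sig (constructive_indefinite_description _ (H a))).
Qed.

Inductive wk {A : Type} (R : A -> A -> Prop) : A -> A -> list A -> Prop :=
| wk1 : forall x, wk R x x [x]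
| wkS : forall x y z l, R x y -> wk R y z l -> wk R x z (x :: l).

Lemma wk_head {A} (R : A -> A -> Prop) x y l : wk R x y l -> exists l', l = x :: l'.
Proof. intros H; destruct H; eauto. Qed.

Lemma wk_in_l {A} (R : A -> A -> Prop) x y l : wk R x y l -> In x l.
Proof. intros H; destruct H; simpl; auto. Qed.

Lemma wk_in_r {A} (R : A -> A -> Prop) x y l : wk R x y l -> In y l.
Proof. induction 1; simpl; auto. Qed.

Lemma wk_snoc {A} (R : A -> A -> Prop) x y z l : wk R x y l -> R y z -> wk R x z (l ++ [z]).
Proof.
  induction 1; intros Hr; simpl.
  - apply wkS with z; auto. constructor.
  - apply wkS with y; auto.
Qed.

Lemma wk_app {A} (R : A -> A -> Prop) x y z l1 l2 :
  wk R x y l1 -> wk R y z l2 -> wk R x z (l1 ++ tl l2).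
Proof.
  induction 1; intros H2; simpl.
  - destruct H2; simpl; [constructor| eapply wkS; eauto].
  - apply wkS with y; auto.
Qed.

Lemma wk_rev {A} (R : A -> A -> Prop) x y l :
  (forall a b, R a b -> R b a) -> wk R x y l -> wk R y x (rev l).
Proof.
  intros Hs. induction 1; simpl.
  - constructor.
  - apply wk_snoc with y; auto.
Qed.

Lemma wk_map {A B} (R : A -> A -> Prop) (R' : B -> B -> Prop) (f : A -> B) x y l :
  (forall a b, R a b -> R' (f a) (f b)) -> wk R x y l -> wk R' (f x) (f y) (map f l).
Proof.
  intros Hf. induction 1; simpl. constructor. apply wkS with (f y); auto.
Qed.

Lemma wk_cross {A} (R : A -> A -> Prop) (P : A -> Prop) x y l :
  wk R x y l -> P x -> ~ P y ->
  exists a b, In a l /\ In b l /\ R a b /\ P a /\ ~ P b.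
Proof.
  induction 1; intros Hx Hy.
  - contradiction.
  - destruct (classic (P y)) as [Py|Py].
    + destruct (IHwk Py Hy) as (a & b & Ha & Hb & Hab & Pa & Pb).
      exists a, b; simpl; auto 10.
    + exists x, y; repeat split; simpl; auto. right. eapply wk_in_l; eauto.
Qed.

Lemma wk_prefix {A} (R : A -> A -> Prop) x y l z :
  wk R x y l -> In z l -> exists l', wk R x z l' /\ incl l' l.
Proof.
  induction 1; intros Hz.
  - destruct Hz as [<-|[]]. exists [x]; split; [constructor| apply incl_refl].
  - destruct (classic (x = z)) as [<-|Hne].
    + exists [x]; split; [constructor|]. intros a [<-|[]]; simpl; auto.
    + destruct Hz as [->|Hz]; [congruence|].
      destruct (IHwk Hz) as (l' & Hw & Hi). exists (x :: l'); split.
      * apply wkS with y; auto.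
      * intros a [<-|Ha]; simpl; auto.
Qed.

Lemma wk_nodup {A} (R : A -> A -> Prop) x y l :
  wk R x y l -> exists l', wk R x y l' /\ NoDup l' /\ incl l' l.
Proof.
  induction 1.
  - exists [x]; repeat split; [constructor| constructor; auto; constructor | apply incl_refl].
  - destruct IHwk as (l' & Hw & Hn & Hi).
    destruct (classic (In x l')) as [Hx|Hx].
    + apply in_split in Hx. destruct Hx as (l1 & l2 & ->).
      assert (Hsuf : forall k1 u, wk R u z (k1 ++ x :: l2) -> wk R x z (x :: l2)).
      { induction k1 as [|a k1 IH]; intros u Hu; simpl in Hu.
        - replace u with x in Hu by (inversion Hu; auto). exact Hu.
        - inversion Hu; subst; [ destruct k1; discriminate | eapply IH; eauto ]. }
      exists (x :: l2); repeat split.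
      * eapply Hsuf; eauto.
      * apply NoDup_app_remove_l in Hn. auto.
      * intros a Ha. right. apply Hi. apply in_or_app; right; auto.
    + exists (x :: l'); repeat split.
      * apply wkS with y; auto.
      * constructor; auto.
      * intros a [<-|Ha]; simpl; auto.
Qed.

Lemma hd_app_ne {A} (l : list A) a : l <> [] -> hd_error (l ++ [a]) = hd_error l.
Proof. destruct l; simpl; congruence. Qed.

Lemma rev_cons_ne {A} (a : A) l : rev (a :: l) <> [].
Proof. simpl. intro H. destruct (rev l); discriminate. Qed.

Lemma wft_wk {A} (R : A -> A -> Prop) p x y : walk_from_to R p x y <-> wk R x y p.
Proof.
  split.
  - intros (Hw & Hh & Ht). revert x Hw Hh Ht.
    induction p as [|a p IH]; intros x Hw Hh Ht; [discriminate|].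
    simpl in Hh. inversion Hh; subst.
    destruct p as [|b p].
    + simpl in Ht. inversion Ht; subst. constructor.
    + destruct Hw as [Hab Hw]. apply wkS with b; auto. apply IH; auto.
      change (rev (x :: b :: p)) with (rev (b :: p) ++ [x]) in Ht.
      rewrite hd_app_ne in Ht; auto. apply rev_cons_ne.
  - induction 1.
    + repeat split.
    + destruct IHwk as (Hw & Hh & Ht). repeat split.
      * destruct l; [discriminate|]. simpl in Hh. inversion Hh; subst. simpl. split; auto.
      * change (rev (x :: l)) with (rev l ++ [x]). rewrite hd_app_ne; auto.
        destruct l; [discriminate| apply rev_cons_ne].
Qed.

Lemma avoid_inj {A} (f : nat -> A) (L : list A) :
  (forall n m, f n = f m -> n = m) -> exists N, forall n, N <= n -> ~ In (f n) L.
Proof.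
  intros Hi. induction L as [|a L IH].
  - exists 0; intros n _ [].
  - destruct IH as [N HN].
    destruct (classic (exists n0, f n0 = a)) as [[n0 Hn0]|Hno].
    + exists (max N (S n0)). intros n Hn [Ha|Ha].
      * rewrite <- Hn0 in Ha. apply Hi in Ha. lia.
      * apply (HN n); auto; lia.
    + exists N. intros n Hn [Ha|Ha]; [apply Hno; eauto| apply (HN n); auto].
Qed.

Lemma avoid_disj {A} (P : nat -> list A) (L : list A) :
  (forall i j, i <> j -> forall v, In v (P i) -> ~ In v (P j)) ->
  exists N, forall i, N <= i -> forall v, In v L -> ~ In v (P i).
Proof.
  intros Hd. induction L as [|a L IH].
  - exists 0; intros i _ v [].
  - destruct IH as [N HN].
    destruct (classic (exists i0, In a (P i0))) as [[i0 Hi0]|Hno].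
    + exists (max N (S i0)). intros i Hi v [<-|Hv] Hin.
      * apply (Hd i0 i) with a; auto. lia.
      * apply (HN i) with v; auto; lia.
    + exists N. intros i Hi v [<-|Hv] Hin; [apply Hno; eauto| apply (HN i) with v; auto].
Qed.

Lemma nodup_map_seq {A} (q : nat -> A) a k :
  (forall i j, a <= i -> i < a + k -> a <= j -> j < a + k -> q i = q j -> i = j) ->
  NoDup (map q (seq a k)).
Proof.
  revert a. induction k as [|k IH]; intros a Hq; simpl; constructor.
  - intros Hin. apply in_map_iff in Hin. destruct Hin as (j & Hj & Hin).
    apply in_seq in Hin. assert (j = a) by (apply Hq; auto; lia). lia.
  - apply IH. intros i j Hi1 Hi2 Hj1 Hj2 E. apply Hq; auto; lia.
Qed.

Lemma pigeon {A} n (q : nat -> A) (L : list A) :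
  (forall i, i <= n -> In (q i) L) -> length L <= n ->
  exists i j, i < j /\ j <= n /\ q i = q j.
Proof.
  intros Hin Hl. apply NNPP. intros Hno.
  assert (Hnd : NoDup (map q (seq 0 (S n)))).
  { apply nodup_map_seq. intros i j _ Hi _ Hj E.
    destruct (lt_eq_lt_dec i j) as [[H|H]|H]; auto.
    - exfalso; apply Hno; exists i, j; repeat split; auto; lia.
    - exfalso; apply Hno; exists j, i; repeat split; auto; lia. }
  assert (Hinc : incl (map q (seq 0 (S n))) L).
  { intros x Hx. apply in_map_iff in Hx. destruct Hx as (i & <- & Hi).
    apply in_seq in Hi. apply Hin. lia. }
  pose proof (NoDup_incl_length Hnd Hinc). rewrite length_map, length_seq in H. lia.
Qed.

Fixpoint subs {A} (l : list A) : list (list A) :=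
  match l with
  | [] => [[]]
  | x :: l => map (cons x) (subs l) ++ subs l
  end.

Lemma filter_subs {A} (f : A -> bool) l : In (filter f l) (subs l).
Proof.
  induction l as [|a l IH]; simpl; auto.
  destruct (f a); apply in_or_app; [left; apply in_map; auto | right; auto].
Qed.

Definition dec (P : Prop) : bool := if excluded_middle_informative P then true else false.
Lemma dec_spec (P : Prop) : dec P = true <-> P.
Proof. unfold dec. destruct (excluded_middle_informative P); split; auto; discriminate. Qed.

Section Tree.
Variable N : Type.
Variable tadj : N -> N -> Prop.
Hypothesis Htree : is_tree tadj.

Lemma t_sym a b : tadj a b -> tadj b a.
Proof. destruct Htree as [[H _] _]; auto. Qed.
Lemma t_irr a : ~ tadj a a.
Proof. destruct Htree as [[_ H] _]; auto. Qed.
Lemma t_conn a b : exists l, wk tadj a b l.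
Proof. destruct Htree as [_ [H _]]. destruct (H a b) as [l Hl]. exists l. apply wft_wk; auto. Qed.
Lemma t_ne a b : tadj a b -> a <> b.
Proof. intros H ->. eapply t_irr; eauto. Qed.

Definition Ts (a b s : N) : Prop := exists l, wk tadj b s l /\ ~ In a l.

Lemma Ts_refl a b : tadj a b -> Ts a b b.
Proof. intros H. exists [b]; split; [constructor|]. intros [E|[]]. apply (t_ne H); auto. Qed.

Lemma Ts_not a b : ~ Ts a b a.
Proof. intros (l & Hl & Ha). apply Ha. eapply wk_in_r; eauto. Qed.

Lemma TL a b x : tadj a b -> Ts a b x -> tadj x a -> x = b.
Proof.
  intros Hab (l & Hl & Ha) Hxa. apply NNPP; intros Hxb.
  destruct (wk_nodup Hl) as (l' & Hl' & Hnd & Hinc).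
  destruct Htree as [_ [_ Hcyc]]. apply Hcyc.
  exists (a :: l'), a, x. split; [|split; [|split]].
  - constructor; auto.
  - inversion Hl'; subst; [congruence|]. inversion H0; subst; simpl; lia.
  - apply wft_wk. apply wkS with b; auto.
  - auto.
Qed.

Lemma Ts_cross a b x y : tadj a b -> Ts a b x -> tadj x y -> ~ Ts a b y -> y = a /\ x = b.
Proof.
  intros Hab Hx Hxy Hy.
  assert (y = a).
  { apply NNPP; intros Hne. apply Hy. destruct Hx as (l & Hl & Ha).
    exists (l ++ [y]); split. eapply wk_snoc; eauto.
    intros Hin. apply in_app_or in Hin. destruct Hin as [H|[H|[]]]; auto. }
  subst. split; auto. apply TL with a; auto.
Qed.

Lemma Ts_ext a b x y l : Ts a b x -> wk tadj x y l -> ~ In a l -> Ts a b y.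
Proof.
  intros (l0 & H0 & Ha0) Hl Ha. exists (l0 ++ tl l). split.
  eapply wk_app; eauto. intros Hin. apply in_app_or in Hin. destruct Hin as [H|H]; auto.
  apply Ha. destruct l; simpl in *; auto.
Qed.

Lemma Ts_dich a b : tadj a b -> forall s, Ts a b s \/ Ts b a s.
Proof.
  intros Hab s. destruct (t_conn s a) as [l Hl].
  remember a as a' eqn:Ea in Hl.
  induction Hl as [x|x y z l Hxy Hl IH]; subst.
  - right. apply Ts_refl. apply t_sym; auto.
  - destruct IH as [H|H]; auto.
    + destruct (classic (x = a)) as [->|Hxa].
      * right. apply Ts_refl. apply t_sym; auto.
      * left. apply Ts_ext with y [y; x]; auto.
        apply wkS with x; [apply t_sym; auto| constructor].
        intros [E|[E|[]]]; subst; auto. apply (Ts_not H).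
    + destruct (classic (x = b)) as [->|Hxb].
      * left. apply Ts_refl. auto.
      * right. apply Ts_ext with y [y; x]; auto.
        apply wkS with x; [apply t_sym; auto| constructor].
        intros [E|[E|[]]]; subst; auto. apply (Ts_not H).
Qed.

Lemma Ts_both a b s : tadj a b -> Ts a b s -> Ts b a s -> False.
Proof.
  intros Hab H1 (l & Hl & Hb).
  destruct (wk_cross (fun z => ~ Ts a b z) Hl) as (x & y & Hx & Hy & Hxy & Px & Py).
  - apply Ts_not.
  - auto.
  - apply NNPP in Py. destruct (Ts_cross Hab Py (t_sym Hxy) Px) as [-> ->]. auto.
Qed.

Lemma Ts_prefix a b x z : Ts a b x -> (exists l, wk tadj b x l /\ ~ In a l /\ In z l) -> Ts a b z.
Proof.
  intros _ (l & Hl & Ha & Hz). destruct (wk_prefix _ Hl Hz) as (l' & Hl' & Hi).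
  exists l'; split; auto.
Qed.

Lemma TSINC a b d x : tadj a b -> tadj b d -> a <> d -> Ts b a x -> Ts d b x.
Proof.
  intros Hab Hbd Had (l & Hl & Hb). exists (b :: l). split.
  - apply wkS with a; auto. apply t_sym; auto.
  - intros [E|Hin]. + apply (t_ne Hbd); auto.
    + apply Had. destruct (wk_prefix _ Hl Hin) as (l' & Hl' & Hi).
      symmetry. apply TL with b; auto. apply t_sym; auto.
      exists l'; split; auto. apply t_sym; auto.
Qed.

Lemma CHAIN (c : nat -> N) :
  (forall k, tadj (c k) (c (S k))) -> (forall k, c (S (S k)) <> c k) ->
  forall k j, j <= k -> Ts (c (S k)) (c k) (c j).
Proof.
  intros Ha Hn. induction k as [|k IH]; intros j Hj.
  - assert (j = 0) by lia. subst. apply Ts_refl. apply t_sym; auto.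
  - destruct (Nat.eq_dec j (S k)) as [->|Hne].
    + apply Ts_refl. apply t_sym; auto.
    + apply TSINC with (c k); auto. apply IH; lia.
Qed.

Lemma CHAIN_inj (c : nat -> N) :
  (forall k, tadj (c k) (c (S k))) -> (forall k, c (S (S k)) <> c k) ->
  forall i j, c i = c j -> i = j.
Proof.
  intros Ha Hn.
  assert (forall i j, i < j -> c i <> c j).
  { intros i j Hij E. destruct j as [|j]; [lia|].
    assert (Hij' : i <= j) by lia. pose proof (CHAIN c Ha Hn Hij'). rewrite E in H. apply (Ts_not H). }
  intros i j E. destruct (lt_eq_lt_dec i j) as [[H1|H1]|H1]; auto.
  - exfalso; apply (H i j); auto.
  - exfalso; apply (H j i); auto.
Qed.

Lemma Ts_map (f : N -> N) a b s : is_aut tadj f -> Ts a b s -> Ts (f a) (f b) (f s).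
Proof.
  intros [[g [Hg1 Hg2]] Hf] (l & Hl & Ha). exists (map f l). split.
  - eapply wk_map; [intros u v Huv; apply (proj1 (Hf u v) Huv) | exact Hl].
  - intros Hin. apply in_map_iff in Hin. destruct Hin as (x & Hx & Hin).
    apply Ha. assert (x = a) by (rewrite <- (Hg1 x), Hx, Hg1; auto). subst; auto.
Qed.

End Tree.

Section Main.
Variables V N : Type.
Variable adj : V -> V -> Prop.
Variable tadj : N -> N -> Prop.
Variable X : N -> V -> Prop.
Hypothesis Hsg : simple_graph adj.
Hypothesis Hlf : locally_finite adj.
Hypothesis Htd : is_tree_decomposition adj tadj X.
Variable act : (V -> V) -> N -> N.
Hypothesis Hact_aut : forall f, is_aut adj f -> is_aut tadj (act f).
Hypothesis Hact_id : forall t, act (fun v => v) t = t.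
Hypothesis Hact_comp : forall f h, is_aut adj f -> is_aut adj h ->
       forall t, act (fun v => f (h v)) t = act f (act h t).
Hypothesis Hact_X : forall f, is_aut adj f -> forall t v,
       X (act f t) v <-> exists u, X t u /\ f u = v.
Hypothesis Hbags : bags_finite_cliques adj X.
Hypothesis Huniq : unique_adhesion_edges tadj X.
Variable r : nat -> V.
Hypothesis Hr : is_ray adj r.
Hypothesis Hrinv : forall f, is_aut adj f -> equiv_rays adj (fun n => f (r n)) r.
Variable C : Type.
Variable c : V -> C.
Hypothesis Hc : proper_coloring adj c.
Variable l0 : list V.
Hypothesis Hper : forall v, exists f u,
    is_aut adj f /\ (forall w, c (f w) = c w) /\ In u l0 /\ f u = v.

Lemma Htree : is_tree tadj.
Proof. destruct Htd; auto. Qed.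
Lemma a_sym u v : adj u v -> adj v u.
Proof. destruct Hsg; auto. Qed.
Lemma a_irr v : ~ adj v v.
Proof. destruct Hsg; auto. Qed.
Lemma cover v : exists t, X t v.
Proof. destruct Htd as (_ & H & _); auto. Qed.
Lemma edge_bag u v : adj u v -> exists t, X t u /\ X t v.
Proof. destruct Htd as (_ & _ & H & _); auto. Qed.
Lemma td_walk v t t' : X t v -> X t' v -> exists l, wk tadj t t' l /\ forall s, In s l -> X s v.
Proof.
  destruct Htd as (_ & _ & _ & H). intros H1 H2. destruct (H v t t' H1 H2) as (l & Hl & Hs).
  exists l; split; auto. apply wft_wk; auto.
Qed.
Lemma bag_list t : exists L, forall v, X t v -> In v L.
Proof. apply Hbags. Qed.
Lemma clique t u v : X t u -> X t v -> u <> v -> adj u v.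
Proof. apply Hbags. Qed.

Definition A a b v := X a v /\ X b v.
Definition Vs a b v := ~ A a b v /\ exists s, Ts tadj a b s /\ X s v.
Definition Ev (rho : nat -> V) (P : V -> Prop) := exists M, forall n, M <= n -> P (rho n).

Lemma VCROSS a b s s' v : tadj a b -> Ts tadj a b s -> ~ Ts tadj a b s' -> X s v -> X s' v -> A a b v.
Proof.
  intros Hab Hs Hs' H1 H2. destruct (td_walk H1 H2) as (l & Hl & Hin).
  destruct (wk_cross (Ts tadj a b) Hl Hs Hs') as (x & y & Hx & Hy & Hxy & Px & Py).
  destruct (Ts_cross Htree Hab Px Hxy Py) as [-> ->]. split; auto.
Qed.

Lemma Vs_step a b v w : tadj a b -> Vs a b v -> adj v w -> ~ A a b w -> Vs a b w.
Proof.
  intros Hab [Hv (s & Hs & Hsv)] Hvw Hw. split; auto.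
  destruct (edge_bag Hvw) as (s' & H1 & H2).
  destruct (classic (Ts tadj a b s')) as [H|H]; eauto.
  exfalso. apply Hv. eapply VCROSS; eauto.
Qed.

Lemma Vs_walk a b v w l : tadj a b -> wk adj v w l -> Vs a b v -> (forall z, In z l -> ~ A a b z) -> Vs a b w.
Proof.
  intros Hab. induction 1; intros Hv Hz; auto.
  apply IHwk; [| intros; apply Hz; simpl; auto].
  apply Vs_step with x; auto. apply Hz. right. eapply wk_in_l; eauto.
Qed.

Lemma A_sym a b v : A a b v -> A b a v.
Proof. intros [H1 H2]; split; auto. Qed.

Lemma Vs_both a b v : tadj a b -> Vs a b v -> Vs b a v -> False.
Proof.
  intros Hab [Hv (s & Hs & Hsv)] [_ (s' & Hs' & Hsv')].
  apply Hv. eapply VCROSS; eauto. intro H. exact (Ts_both Htree Hab H Hs').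
Qed.

Lemma Vs_cover a b v : tadj a b -> ~ A a b v -> Vs a b v \/ Vs b a v.
Proof.
  intros Hab Hv. destruct (cover v) as [s Hs].
  destruct (Ts_dich Htree a b Hab s) as [H|H]; [left|right]; split; eauto.
  intro H'; apply Hv; apply A_sym; auto.
Qed.

Lemma VINC a b c' v : tadj a b -> tadj b c' -> a <> c' -> Vs b c' v -> Vs a b v.
Proof.
  intros Hab Hbc Hac [Hv (s & Hs & Hsv)]. split.
  - intros [Ha Hb]. apply Hv. eapply VCROSS; eauto. apply Ts_not.
  - exists s; split; auto. apply (TSINC Htree (a := c')); auto.
    apply (t_sym Htree); auto. apply (t_sym Htree); auto.
Qed.

Lemma aut_inj f : is_aut adj f -> forall x y, f x = f y -> x = y.
Proof. intros [[g [H1 H2]] _] x y E. rewrite <- (H1 x), E, H1; auto. Qed.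

Lemma X_map f t u : is_aut adj f -> X t u -> X (act f t) (f u).
Proof. intros Hf H. apply Hact_X; eauto. Qed.
Lemma X_unmap f t u : is_aut adj f -> X (act f t) (f u) -> X t u.
Proof. intros Hf H. apply Hact_X in H; auto. destruct H as (y & Hy & E). apply aut_inj in E; subst; auto. Qed.

Lemma Vs_map f a b v : is_aut adj f -> Vs a b v -> Vs (act f a) (act f b) (f v).
Proof.
  intros Hf [Hv (s & Hs & Hsv)]. split.
  - intros [H1 H2]. apply Hv. split; eapply X_unmap; eauto.
  - exists (act f s). split. apply Ts_map; auto. apply X_map; auto.
Qed.

Lemma out_bag t v : ~ X t v -> exists b, tadj t b /\ Vs t b v.
Proof.
  intros Hv. destruct (cover v) as [s Hs].
  destruct (t_conn Htree t s) as [l Hl]. destruct (wk_nodup Hl) as (l' & Hl' & Hnd & _).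
  inversion Hl' as [x0 Ex Ey El | x0 y z l'' Hxy Hl'' Ex Ez El]; subst. { contradiction. }
  exists y. split; auto. split. intros [Hx0 _]; auto.
  exists s. split; auto. exists l''. split; auto. inversion Hnd; auto.
Qed.

Lemma ray_inj rho : is_ray adj rho -> forall n m, rho n = rho m -> n = m.
Proof. intros [H _]; auto. Qed.
Lemma ray_adj rho : is_ray adj rho -> forall n, adj (rho n) (rho (S n)).
Proof. intros [_ H]; auto. Qed.

Lemma ev_and rho P Q : Ev rho P -> Ev rho Q -> exists n, P (rho n) /\ Q (rho n).
Proof. intros [M1 H1] [M2 H2]. exists (max M1 M2). split; [apply H1|apply H2]; lia. Qed.

Lemma ev_avoid rho L : is_ray adj rho -> Ev rho (fun v => ~ In v L).
Proof. intros Hr'. destruct (avoid_inj rho L (ray_inj Hr')) as [M HM]. exists M; auto. Qed.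

Lemma dir_ex rho t : is_ray adj rho -> exists b, tadj t b /\ Ev rho (Vs t b).
Proof.
  intros Hrho. destruct (bag_list t) as [L HL].
  destruct (ev_avoid L Hrho) as [M HM].
  assert (HX : forall n, M <= n -> ~ X t (rho n)).
  { intros n Hn Hx. apply (HM n Hn). auto. }
  destruct (out_bag (HX M (le_n _))) as (b & Hb & Hv).
  exists b. split; auto. exists M. intros n Hn. induction Hn; auto.
  apply Vs_step with (rho m); auto. apply ray_adj; auto.
  intros [H _]. apply (HX (S m)); auto.
Qed.

Lemma Vs_uniq t b b' v : tadj t b -> tadj t b' -> Vs t b v -> Vs t b' v -> b = b'.
Proof.
  intros H1 H2 V1 V2. apply NNPP; intros Hne.
  apply (Vs_both H1 V1). apply VINC with b'; auto. apply (t_sym Htree); auto.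
Qed.

Lemma dir_uniq rho t b b' : tadj t b -> tadj t b' -> Ev rho (Vs t b) -> Ev rho (Vs t b') -> b = b'.
Proof.
  intros H1 H2 E1 E2. destruct (ev_and E1 E2) as (n & V1 & V2). eapply Vs_uniq; eauto.
Qed.

Lemma ev_equiv rho sigma t b : is_ray adj sigma -> equiv_rays adj rho sigma ->
  tadj t b -> Ev rho (Vs t b) -> Ev sigma (Vs t b).
Proof.
  intros Hs (P & HP & Hd) Htb [M1 HM1].
  destruct (dir_ex t Hs) as (b'' & Hb'' & [M2 HM2]).
  assert (Hch : forall i, exists nm : nat * nat, walk_from_to adj (P i) (rho (fst nm)) (sigma (snd nm))).
  { intros i. destruct (HP i) as (n & m & H). exists (n, m). auto. }
  destruct (choice' _ Hch) as [nm Hnm].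
  assert (Hinj1 : forall i j, fst (nm i) = fst (nm j) -> i = j).
  { intros i j E. apply NNPP; intros Hne. apply (Hd i j Hne (rho (fst (nm i)))).
    - eapply wk_in_l. apply wft_wk. apply Hnm.
    - rewrite E. eapply wk_in_l. apply wft_wk. apply Hnm. }
  assert (Hinj2 : forall i j, snd (nm i) = snd (nm j) -> i = j).
  { intros i j E. apply NNPP; intros Hne. apply (Hd i j Hne (sigma (snd (nm i)))).
    - eapply wk_in_r. apply wft_wk. apply Hnm.
    - rewrite E. eapply wk_in_r. apply wft_wk. apply Hnm. }
  destruct (avoid_inj (fun i => fst (nm i)) (seq 0 M1) Hinj1) as [B1 HB1].
  destruct (avoid_inj (fun i => snd (nm i)) (seq 0 M2) Hinj2) as [B2 HB2].
  destruct (bag_list t) as [L HL].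
  destruct (avoid_disj P L Hd) as [B3 HB3].
  set (i := B1 + B2 + B3).
  assert (Hn : M1 <= fst (nm i)).
  { pose proof (HB1 i ltac:(unfold i; lia)). simpl in H.
    destruct (le_lt_dec M1 (fst (nm i))); auto. exfalso; apply H; apply in_seq; lia. }
  assert (Hm : M2 <= snd (nm i)).
  { pose proof (HB2 i ltac:(unfold i; lia)). simpl in H.
    destruct (le_lt_dec M2 (snd (nm i))); auto. exfalso; apply H; apply in_seq; lia. }
  assert (Hw : wk adj (rho (fst (nm i))) (sigma (snd (nm i))) (P i)) by (apply wft_wk; apply Hnm).
  assert (Hfin : Vs t b (sigma (snd (nm i)))).
  { apply Vs_walk with (rho (fst (nm i))) (P i); auto.
    intros z Hz [Hz1 _]. apply (HB3 i ltac:(unfold i; lia) z); auto. }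
  assert (b = b'') by (eapply Vs_uniq; eauto). subst. exists M2; auto.
Qed.

Definition dirf (rho : nat -> V) (t : N) : N :=
  epsilon (inhabits t) (fun b => tadj t b /\ Ev rho (Vs t b)).

Lemma dirf_spec rho t : is_ray adj rho -> tadj t (dirf rho t) /\ Ev rho (Vs t (dirf rho t)).
Proof. intros H. unfold dirf. apply epsilon_spec. apply dir_ex; auto. Qed.

Lemma dirf_uniq rho t b : is_ray adj rho -> tadj t b -> Ev rho (Vs t b) -> dirf rho t = b.
Proof.
  intros H Hb E. destruct (dirf_spec t H) as [H1 H2]. eapply dir_uniq; eauto.
Qed.

Definition p := dirf r.

Lemma p_adj t : tadj t (p t).
Proof. apply (dirf_spec t Hr). Qed.
Lemma p_ev t : Ev r (Vs t (p t)).
Proof. apply (dirf_spec t Hr). Qed.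

Lemma tree_aut f : is_aut adj f -> forall a b, tadj a b -> tadj (act f a) (act f b).
Proof. intros Hf a b H. apply (proj1 (proj2 (Hact_aut Hf) a b)); auto. Qed.
Lemma act_inj f : is_aut adj f -> forall a b, act f a = act f b -> a = b.
Proof. intros Hf. destruct (Hact_aut Hf) as [[g [H1 H2]] _]. intros a b E. rewrite <- (H1 a), E, H1; auto. Qed.

Lemma ev_map f rho a b : is_aut adj f -> Ev rho (Vs a b) -> Ev (fun n => f (rho n)) (Vs (act f a) (act f b)).
Proof. intros Hf [M HM]. exists M. intros n Hn. apply Vs_map; auto. Qed.

Lemma p_equiv f t : is_aut adj f -> p (act f t) = act f (p t).
Proof.
  intros Hf. unfold p. apply dirf_uniq; auto. apply tree_aut; auto. apply p_adj.
  apply ev_equiv with (fun n => f (r n)); auto. apply tree_aut; auto. apply p_adj.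
  apply ev_map; auto. apply p_ev.
Qed.

Lemma ppp t : p (p t) <> t.
Proof.
  intros E. destruct (ev_and (p_ev t) (p_ev (p t))) as (n & V1 & V2).
  rewrite E in V2. apply (Vs_both (p_adj t) V1 V2).
Qed.

Lemma adj_dich x y : tadj x y -> p x = y \/ p y = x.
Proof.
  intros Hxy. destruct (classic (p x = y)) as [H|H]; auto. right.
  unfold p. apply dirf_uniq; auto. apply (t_sym Htree); auto.
  destruct (p_ev x) as [M HM]. exists M. intros n Hn. apply VINC with (p x); auto.
  apply (t_sym Htree); auto. apply p_adj.
Qed.

Lemma UP rho x y : Ev rho (Vs x y) -> tadj x y -> y <> p x -> Ev rho (Vs (p x) x).
Proof.
  intros [M HM] Hxy Hne. exists M. intros n Hn. apply VINC with y; auto.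
  apply (t_sym Htree); apply p_adj.
Qed.

Lemma GD x y : tadj x y -> y <> p x -> p y = x.
Proof. intros H1 H2. destruct (adj_dich H1); auto. congruence. Qed.

Lemma DOWNSTEP rho x : is_ray adj rho -> Ev rho (Vs (p x) x) ->
  dirf rho x <> p x /\ p (dirf rho x) = x /\ Ev rho (Vs (p (dirf rho x)) (dirf rho x)).
Proof.
  intros Hrho E. destruct (dirf_spec x Hrho) as [H1 H2].
  assert (Hne : dirf rho x <> p x).
  { intros E'. rewrite E' in H2. destruct (ev_and E H2) as (n & V1 & V2).
    apply (Vs_both (p_adj x) V2 V1). }
  assert (Hp : p (dirf rho x) = x) by (apply GD; auto).
  repeat split; auto. rewrite Hp; auto.
Qed.

Definition Hc_aut (h : V -> V) := is_aut adj h /\ forall w, c (h w) = c w.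

Lemma fix_bag h t v : Hc_aut h -> act h t = t -> X t v -> h v = v.
Proof.
  intros [Ha Hcol] Ht Hv. apply NNPP; intros Hne.
  assert (H1 : X t (h v)) by (rewrite <- Ht; apply X_map; auto).
  apply (Hc (clique H1 Hv Hne)). auto.
Qed.

Lemma stab_step h x y : Hc_aut h -> act h x = x -> tadj x y -> act h y = y.
Proof.
  intros Hh Hx Hxy. destruct Hh as [Ha Hcol] eqn:EH.
  assert (Hxy' : tadj x (act h y)) by (rewrite <- Hx at 1; apply tree_aut; auto).
  destruct (Huniq Hxy Hxy') as [[_ E]|[E _]]; auto.
  - intros v. split.
    + intros [H1 H2]. split; auto. rewrite <- (fix_bag Hh Hx H1). apply X_map; auto.
    + intros [H1 H2]. apply Hact_X in H2; auto. destruct H2 as (u & Hu & <-).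
      assert (Hxu : X x u). { rewrite <- Hx in H1. eapply X_unmap; eauto. }
      rewrite (fix_bag Hh Hx Hxu). split; auto.
  - exfalso. subst. exact (t_irr Htree _ Hxy).
Qed.

Lemma stab h t : Hc_aut h -> act h t = t -> forall s, act h s = s.
Proof.
  intros Hh Ht s. destruct (t_conn Htree t s) as [l Hl].
  induction Hl; auto. apply IHHl. eapply stab_step; eauto.
Qed.

Lemma NE x y1 y2 : tadj x y1 -> tadj x y2 -> y1 <> y2 -> exists v, X x v.
Proof.
  intros H1 H2 Hne. apply NNPP; intros Hno.
  destruct (Huniq H1 H2) as [[_ E]|[E _]].
  - intros v; split; intros [Ha _]; exfalso; apply Hno; eauto.
  - auto.
  - subst. exact (t_irr Htree _ H1).
Qed.

Lemma nodes_fin u : exists L, forall s, X s u -> In s L.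
Proof.
  destruct (classic (exists s0, X s0 u)) as [[s0 Hs0]|Hno].
  2:{ exists []. intros s Hs; exfalso; eauto. }
  destruct (Hlf u) as [Lu HLu].
  set (Nu := u :: Lu).
  assert (Hbag : forall s v, X s u -> X s v -> In v Nu).
  { intros s v Hsu Hsv. destruct (classic (v = u)) as [->|Hne]; [left; auto|].
    right. apply HLu. apply (clique Hsu Hsv). auto. }
  set (code := fun a b => filter (fun v => dec (A a b v)) Nu).
  set (E := fun cd => epsilon (inhabits (s0, s0))
     (fun e : N * N => tadj (fst e) (snd e) /\ X (fst e) u /\ X (snd e) u /\ code (fst e) (snd e) = cd)).
  exists (s0 :: flat_map (fun cd => [fst (E cd); snd (E cd)]) (subs Nu)).
  intros s Hs. destruct (classic (s = s0)) as [->|Hne]; [left; auto|]. right.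
  destruct (td_walk Hs Hs0) as (l & Hl & Hin).
  inversion Hl as [x0 Ex Ey El | x0 q z l'' Hsq Hl'' Ex Ez El]; subst; [congruence|].
  assert (Hq : X q u) by (apply Hin; right; eapply wk_in_l; eauto).
  set (cd := code s q).
  assert (HE : tadj (fst (E cd)) (snd (E cd)) /\ X (fst (E cd)) u /\ X (snd (E cd)) u /\ code (fst (E cd)) (snd (E cd)) = cd).
  { apply epsilon_spec. exists (s, q). simpl. auto. }
  destruct HE as (Hab & Ha & Hb & Hcd).
  apply in_flat_map. exists cd. split. apply filter_subs.
  assert (Heq : forall v, A s q v <-> A (fst (E cd)) (snd (E cd)) v).
  { intros v. destruct (classic (In v Nu)) as [HvN|HvN].
    - assert (HH : forall a b, In v (code a b) <-> A a b v).
      { intros a b. unfold code. rewrite filter_In, dec_spec. tauto. }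
      rewrite <- HH, <- HH, Hcd. reflexivity.
    - split; intros [H1 H2]; exfalso; apply HvN.
      + apply (Hbag s v Hs H1).
      + apply (Hbag _ v Ha H1). }
  destruct (Huniq Hsq Hab Heq) as [[E1 _]|[_ E2]]; simpl; auto.
Qed.

Lemma inv_aut f g : is_aut adj f -> (forall v, g (f v) = v) -> (forall v, f (g v) = v) -> is_aut adj g.
Proof.
  intros [_ Hf] H1 H2. split. exists f; auto.
  intros u v. rewrite (Hf (g u) (g v)), H2, H2. tauto.
Qed.

Lemma comp_aut f g : is_aut adj f -> is_aut adj g -> is_aut adj (fun v => f (g v)).
Proof.
  intros [[f' [F1 F2]] Hf] [[g' [G1 G2]] Hg]. split.
  - exists (fun v => g' (f' v)). split; intros v; [rewrite F1, G1 | rewrite G2, F2]; auto.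
  - intros u v. rewrite Hg, Hf. tauto.
Qed.

Lemma Hc_inv f : Hc_aut f -> exists g, Hc_aut g /\ (forall v, g (f v) = v) /\ (forall v, f (g v) = v).
Proof.
  intros [Hf Hcol]. destruct Hf as [[g [G1 G2]] Hf'] eqn:EH. exists g.
  refine (conj (conj _ _) (conj G1 G2)).
  - eapply inv_aut; eauto.
  - intros w. rewrite <- (Hcol (g w)), G2. auto.
Qed.

Lemma Hc_comp f g : Hc_aut f -> Hc_aut g -> Hc_aut (fun v => f (g v)).
Proof. intros [H1 C1] [H2 C2]. split. apply comp_aut; auto. intros w. rewrite C1, C2; auto. Qed.

Lemma act_cancel f g : Hc_aut f -> Hc_aut g -> (forall v, f (g v) = v) -> forall t, act f (act g t) = t.
Proof.
  intros [Hf _] [Hg _] E t. rewrite <- Hact_comp; auto.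
  replace (fun v => f (g v)) with (fun v : V => v). apply Hact_id.
  apply functional_extensionality. intros; rewrite E; auto.
Qed.

Definition Lf (u : V) : list N := epsilon (inhabits []) (fun L => forall s, X s u -> In s L).
Lemma Lf_spec u s : X s u -> In s (Lf u).
Proof. unfold Lf. intros H. apply (epsilon_spec (inhabits []) (fun L => forall s, X s u -> In s L)); auto. apply nodes_fin. Qed.

Definition LN := flat_map Lf l0.
Definition K := length LN.

Lemma orbit (f : nat -> N) : (forall i, exists v, X (f i) v) ->
  exists i j, i < j /\ j <= K /\ exists h, Hc_aut h /\ act h (f i) = f j.
Proof.
  intros Hne.
  assert (Hch : forall i, exists qhg : N * (V -> V) * (V -> V),
    Hc_aut (snd (fst qhg)) /\ Hc_aut (snd qhg) /\ In (fst (fst qhg)) LN /\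
    act (snd (fst qhg)) (fst (fst qhg)) = f i /\ act (snd qhg) (f i) = fst (fst qhg)).
  { intros i. destruct (Hne i) as [v Hv]. destruct (Hper v) as (h & u & Ha & Hcol & Hu & <-).
    assert (Hh : Hc_aut h) by (split; auto).
    destruct (Hc_inv Hh) as (g & Hg & G1 & G2).
    exists (act g (f i), h, g). simpl. split; [exact Hh|]. split; [exact Hg|]. split; [|split].
    - apply in_flat_map. exists u. split; auto. apply Lf_spec.
      rewrite <- (G1 u). apply X_map; auto. apply Hg.
    - apply act_cancel; auto.
    - auto. }
  destruct (choice' _ Hch) as [F HF].
  destruct (@pigeon _ K (fun i => fst (fst (F i))) LN) as (i & j & Hij & Hj & E).
  { intros i _. apply HF. }
  { unfold K; auto. }
  exists i, j. repeat split; auto.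
  destruct (HF i) as (Hi1 & Hi2 & _ & Hi4 & Hi5).
  destruct (HF j) as (Hj1 & Hj2 & _ & Hj4 & Hj5).
  exists (fun v => snd (fst (F j)) (snd (F i) v)). split. apply Hc_comp; auto.
  rewrite Hact_comp; [| apply Hj1 | apply Hi2]. rewrite Hi5, E. auto.
Qed.

Definition pp (k : nat) (x : N) := Nat.iter k p x.

Lemma pp_equiv f k x : is_aut adj f -> pp k (act f x) = act f (pp k x).
Proof.
  intros Hf. unfold pp. symmetry. apply Nat.iter_swap_gen. intros a. symmetry. apply p_equiv; auto.
Qed.

Lemma pp_S k x : pp (S k) x = pp k (p x).
Proof. unfold pp. rewrite Nat.iter_succ_r. auto. Qed.
Lemma pp_S' k x : pp (S k) x = p (pp k x).
Proof. unfold pp. rewrite Nat.iter_succ. auto. Qed.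
Lemma pp_add a b x : pp (a + b) x = pp a (pp b x).
Proof. unfold pp. apply Nat.iter_add. Qed.

Definition Brn (s : N) := exists c1 c2 rho1 rho2, is_ray adj rho1 /\ is_ray adj rho2 /\
  tadj s c1 /\ tadj s c2 /\ c1 <> c2 /\ c1 <> p s /\ c2 <> p s /\
  Ev rho1 (Vs s c1) /\ Ev rho2 (Vs s c2).

Definition Br (u : N) (D : nat) := exists s, pp D s = u /\ Brn s.

Definition DT (rho : nat -> V) (s : N) := Ev rho (Vs (p s) s).

Definition Qn (u : N) (D n : nat) := exists L, NoDup L /\ length L = n /\
  forall s, In s L -> pp D s = u /\ exists rho, is_ray adj rho /\ DT rho s.

Definition rayof (x : N) : nat -> V := epsilon (inhabits r) (fun rho => is_ray adj rho /\ DT rho x).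
Definition ch (x : N) : N := dirf (rayof x) x.

Lemma ch_spec x : (exists rho, is_ray adj rho /\ DT rho x) ->
  ch x <> p x /\ p (ch x) = x /\ tadj x (ch x) /\ is_ray adj (rayof x) /\ DT (rayof x) (ch x).
Proof.
  intros H. assert (HR : is_ray adj (rayof x) /\ DT (rayof x) x) by (unfold rayof; apply (epsilon_spec (inhabits r) (fun rho => is_ray adj rho /\ DT rho x)); auto).
  destruct HR as [HR1 HR2]. destruct (DOWNSTEP HR1 HR2) as (H1 & H2 & H3).
  unfold ch. refine (conj H1 (conj H2 (conj _ (conj HR1 H3)))). apply (dirf_spec x HR1).
Qed.

Lemma nodup_map_inj {A B} (f : A -> B) L : (forall x y, In x L -> In y L -> f x = f y -> x = y) ->
  NoDup L -> NoDup (map f L).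
Proof.
  induction L as [|a L IH]; intros Hi Hn; simpl; constructor.
  - intros Hin. apply in_map_iff in Hin. destruct Hin as (x & Hx & Hin).
    inversion Hn; subst. assert (x = a) by (apply Hi; simpl; auto). subst. auto.
  - inversion Hn; subst. apply IH; auto. intros; apply Hi; simpl; auto.
Qed.

Lemma Qn_step u D n : Qn u D n -> Qn u (S D) n.
Proof.
  intros (L & Hnd & Hlen & HL). exists (map ch L). split; [|split].
  - apply nodup_map_inj; auto. intros x y Hx Hy E.
    destruct (HL x Hx) as [_ Hx']. destruct (HL y Hy) as [_ Hy'].
    destruct (ch_spec Hx') as (_ & Ex & _). destruct (ch_spec Hy') as (_ & Ey & _).
    rewrite <- Ex, <- Ey, E. auto.
  - rewrite length_map; auto.
  - intros s Hs. apply in_map_iff in Hs. destruct Hs as (x & <- & Hx).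
    destruct (HL x Hx) as [Hd Hx']. destruct (ch_spec Hx') as (_ & Ex & _ & HR & HD).
    split. rewrite pp_S, Ex; auto. exists (rayof x); auto.
Qed.

Lemma Qn_mono u D D' n : Qn u D n -> D <= D' -> Qn u D' n.
Proof. intros H Hle. induction Hle; auto. apply Qn_step; auto. Qed.

Lemma Brn_DT s : Brn s -> exists rho, is_ray adj rho /\ DT rho s.
Proof.
  intros (c1 & c2 & rho1 & rho2 & R1 & R2 & A1 & A2 & Hne & N1 & N2 & E1 & E2).
  exists rho1. split; auto. unfold DT. eapply UP; eauto.
Qed.

Lemma Qn_br u D n : Qn u D n -> Br u D -> Qn u (S D) (S n).
Proof.
  intros (L & Hnd & Hlen & HL) (s & Hs & HB).
  destruct (classic (In s L)) as [Hin|Hnin].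
  - destruct HB as (c1 & c2 & rho1 & rho2 & R1 & R2 & A1 & A2 & Hne & N1 & N2 & E1 & E2).
    assert (Hpc1 : p c1 = s) by (apply GD; auto).
    assert (Hpc2 : p c2 = s) by (apply GD; auto).
    assert (Hc' : exists c' rho, (c' = c1 \/ c' = c2) /\ c' <> ch s /\ is_ray adj rho /\ Ev rho (Vs s c')).
    { destruct (classic (c1 = ch s)) as [E|E].
      - exists c2, rho2. split; [right; auto|]. split; [congruence|]. split; auto.
      - exists c1, rho1. split; [left; auto|]. split; [auto|]. split; auto. }
    destruct Hc' as (c' & rho & Hc'12 & Hc'ch & Hrho & Ev').
    assert (Hpc' : p c' = s) by (destruct Hc'12; subst; auto).
    exists (c' :: map ch L). split; [|split].
    + constructor.
      * intros Hin'. apply in_map_iff in Hin'. destruct Hin' as (x & Hx & Hxin).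
        destruct (HL x Hxin) as [_ Hx']. destruct (ch_spec Hx') as (_ & Ex & _).
        apply Hc'ch. rewrite <- Hx. rewrite <- Hx in Hpc'. rewrite Ex in Hpc'. subst. auto.
      * apply nodup_map_inj; auto. intros x y Hx Hy E.
        destruct (HL x Hx) as [_ Hx']. destruct (HL y Hy) as [_ Hy'].
        destruct (ch_spec Hx') as (_ & Ex & _). destruct (ch_spec Hy') as (_ & Ey & _).
        rewrite <- Ex, <- Ey, E. auto.
    + simpl. rewrite length_map; auto.
    + intros z [<-|Hz].
      * split. rewrite pp_S, Hpc'; auto. exists rho. split; auto. unfold DT. rewrite Hpc'. auto.
      * apply in_map_iff in Hz. destruct Hz as (x & <- & Hx).
        destruct (HL x Hx) as [Hd Hx']. destruct (ch_spec Hx') as (_ & Ex & _ & HR & HD).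
        split. rewrite pp_S, Ex; auto. exists (rayof x); auto.
  - apply Qn_step. exists (s :: L). split; [constructor; auto|split; [simpl; auto|]].
    intros z [<-|Hz]; auto. split; auto. apply Brn_DT; auto.
Qed.

Lemma ray_map f rho : is_aut adj f -> is_ray adj rho -> is_ray adj (fun n => f (rho n)).
Proof.
  intros Hf [H1 H2]. split.
  - intros n m E. apply H1. eapply aut_inj; eauto.
  - intros n. apply (proj1 (proj2 Hf _ _)). auto.
Qed.

Lemma Brn_map f s : is_aut adj f -> Brn s -> Brn (act f s).
Proof.
  intros Hf (c1 & c2 & rho1 & rho2 & R1 & R2 & A1 & A2 & Hne & N1 & N2 & E1 & E2).
  exists (act f c1), (act f c2), (fun n => f (rho1 n)), (fun n => f (rho2 n)).
  rewrite p_equiv; auto.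
  repeat split; try apply ray_map; try apply tree_aut; try apply ev_map; auto;
    intro E; [apply Hne | apply N1 | apply N2]; eapply act_inj; eauto.
Qed.

Lemma NE_DT s : (exists rho, is_ray adj rho /\ DT rho s) -> exists v, X s v.
Proof.
  intros H. destruct (ch_spec H) as (H1 & _ & H3 & _). apply (NE (y1 := ch s) (y2 := p s)); auto. apply p_adj.
Qed.

Lemma Qn_final u D : Qn u D (S K) -> False.
Proof.
  intros (L & Hnd & Hlen & HL).
  destruct L as [|s0 L']; [discriminate|].
  set (L := s0 :: L') in *.
  assert (Hin : forall i, In (nth i L s0) L).
  { intros i. destruct (le_lt_dec (length L) i). rewrite nth_overflow; auto. left; auto.
    apply nth_In; auto. }
  destruct (orbit (fun i => nth i L s0)) as (i & j & Hij & Hj & h & Hh & E).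
  { intros i. apply NE_DT. apply HL; auto. }
  destruct (HL _ (Hin i)) as [Hdi _]. destruct (HL _ (Hin j)) as [Hdj _].
  assert (Hu : act h u = u).
  { rewrite <- E in Hdj. rewrite pp_equiv in Hdj; [|apply Hh]. rewrite Hdi in Hdj. auto. }
  pose proof (stab Hh Hu (nth i L s0)) as Hfix. rewrite Hfix in E.
  apply (proj1 (NoDup_nth L s0)) in E; auto; lia.
Qed.

Lemma no_Brn t : Brn t -> False.
Proof.
  intros HB.
  destruct (orbit (fun i => pp (S i) t)) as (i & j & Hij & Hj & h & Hh & E).
  { intros i. apply (NE (y1 := pp i t) (y2 := p (pp (S i) t))).
    - rewrite pp_S'. apply (t_sym Htree). apply p_adj.
    - apply p_adj.
    - rewrite pp_S'. intros E. exact (ppp (eq_sym E)). }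
  destruct (Hc_inv Hh) as (g & Hg & G1 & G2).
  set (u := pp (S j) t). set (w := pp (S i) t). set (m := j - i).
  assert (Hgu : act g u = w).
  { unfold u, w. rewrite <- E. apply act_cancel; auto. }
  assert (Hmw : pp m w = u).
  { unfold u, w, m. rewrite <- pp_add. f_equal. lia. }
  assert (HBr : forall k, Br u (k * m + S j)).
  { induction k as [|k IH].
    - exists t. split; auto.
    - destruct IH as (s & Hs & Hb). exists (act g s). split.
      + replace (S k * m + S j) with (m + (k * m + S j)) by lia.
        rewrite pp_add, pp_equiv, Hs, Hgu; auto. apply Hg.
      + apply Brn_map; auto. apply Hg. }
  assert (HQ : forall k, Qn u (S (k * m + S j)) (S k)).
  { induction k as [|k IH].
    - apply Qn_br. exists []. split; [constructor|]. split; [auto|]. intros s0 []. apply HBr.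
    - apply Qn_br. apply Qn_mono with (S (k * m + S j)); auto. simpl. lia. apply HBr. }
  apply (Qn_final (HQ K)).
Qed.

Lemma bag_avoid (cc : nat -> N) (F : list V) : (forall i j, cc i = cc j -> i = j) ->
  exists B, forall k, B <= k -> forall v, In v F -> ~ X (cc k) v.
Proof.
  intros Hi. destruct (avoid_inj cc (flat_map Lf F) Hi) as [B HB].
  exists B. intros k Hk v Hv Hx. apply (HB k Hk). apply in_flat_map. exists v. split; auto.
  apply Lf_spec; auto.
Qed.

Lemma EQ (cc : nat -> N) rho sigma B : (forall i j, cc i = cc j -> i = j) ->
  (forall k, B <= k -> (exists n, X (cc k) (rho n)) /\ (exists m, X (cc k) (sigma m))) ->
  equiv_rays adj rho sigma.
Proof.
  intros Hi Hm.
  destruct (choice' _ bag_list) as [bl Hbl].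
  assert (Hnx : forall k, exists k', k < k' /\ B <= k' /\
     forall j, j <= k -> forall v, X (cc j) v -> ~ X (cc k') v).
  { intros k. destruct (@bag_avoid cc (flat_map (fun j => bl (cc j)) (seq 0 (S k))) Hi) as [B' HB'].
    exists (max (S k) (max B B')). split; [lia|]. split; [lia|].
    intros j Hj v H1 H2. apply (HB' (max (S k) (max B B'))) with v; auto. lia.
    apply in_flat_map. exists j. split; [apply in_seq; lia | apply Hbl; auto]. }
  destruct (choice' _ Hnx) as [nx Hnx'].
  set (ks := fun i => Nat.iter i nx B).
  assert (HksB : forall i, B <= ks i).
  { intros [|i]; simpl; auto. apply Hnx'. }
  assert (Hksm : forall i j, i <= j -> ks i <= ks j).
  { intros i j Hij. induction Hij; auto. simpl. pose proof (proj1 (Hnx' (ks m))). unfold ks in *. lia. }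
  assert (Hdisj : forall i j, i < j -> forall v, X (cc (ks i)) v -> ~ X (cc (ks j)) v).
  { intros i j Hij v H1. destruct j as [|j]; [lia|]. simpl. apply ((proj2 (proj2 (Hnx' (ks j)))) (ks i)); auto.
    apply Hksm; lia. }
  assert (Hch : forall i, exists nm : nat * nat, X (cc (ks i)) (rho (fst nm)) /\ X (cc (ks i)) (sigma (snd nm))).
  { intros i. destruct (Hm (ks i) (HksB i)) as [[n Hn] [m Hm']]. exists (n, m); auto. }
  destruct (choice' _ Hch) as [nm Hnm].
  set (P := fun i => if excluded_middle_informative (rho (fst (nm i)) = sigma (snd (nm i)))
                     then [rho (fst (nm i))] else [rho (fst (nm i)); sigma (snd (nm i))]).
  assert (HPin : forall i v, In v (P i) -> X (cc (ks i)) v).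
  { intros i v. unfold P. destruct (excluded_middle_informative _) as [E|E]; intros Hv.
    - destruct Hv as [<-|[]]. apply Hnm.
    - destruct Hv as [<-|[<-|[]]]; apply Hnm. }
  exists P. split.
  - intros i. exists (fst (nm i)), (snd (nm i)). apply wft_wk. unfold P.
    destruct (excluded_middle_informative _) as [E|E].
    + rewrite <- E. constructor.
    + apply wkS with (sigma (snd (nm i))); [|constructor].
      apply (clique (proj1 (Hnm i)) (proj2 (Hnm i))); auto.
  - intros i j Hij v H1 H2. apply HPin in H1. apply HPin in H2.
    destruct (lt_eq_lt_dec i j) as [[H|H]|H]; [| congruence |].
    + apply (Hdisj i j H v); auto.
    + apply (Hdisj j i H v); auto.
Qed.

Lemma MEET (cc : nat -> N) rho : is_ray adj rho ->
  (forall k, tadj (cc k) (cc (S k))) -> (forall k, cc (S (S k)) <> cc k) ->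
  (forall k, Ev rho (Vs (cc k) (cc (S k)))) ->
  exists B, forall k, B <= k -> exists n, X (cc k) (rho n).
Proof.
  intros Hrho Ha Hn HE.
  pose proof (CHAIN_inj Htree cc Ha Hn) as Hinj.
  destruct (cover (rho 0)) as [s Hs].
  destruct (t_conn Htree (cc 0) s) as [Q HQ].
  destruct (avoid_inj cc Q Hinj) as [B HB].
  exists B. intros k Hk.
  assert (Hside : Ts tadj (cc (S k)) (cc k) s).
  { destruct (Ts_dich Htree (cc k) (cc (S k)) (Ha k) s) as [H|H]; auto. exfalso.
    assert (H0 : ~ Ts tadj (cc k) (cc (S k)) (cc 0)).
    { intros H0. apply (Ts_both Htree (Ha k) H0). apply (CHAIN Htree cc Ha Hn (k := k) (j := 0)). lia. }
    destruct (wk_cross (fun z => ~ Ts tadj (cc k) (cc (S k)) z) HQ H0) as (x & y & Hx & Hy & Hxy & Px & Py).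
    { intros H'; auto. }
    apply NNPP in Py.
    destruct (Ts_cross Htree (Ha k) Py (t_sym Htree _ _ Hxy) Px) as [-> _].
    apply (HB k Hk). auto. }
  destruct (classic (A (cc k) (cc (S k)) (rho 0))) as [HA|HA].
  { exists 0. apply HA. }
  apply NNPP. intros Hno.
  assert (Hall : forall n, Vs (cc (S k)) (cc k) (rho n)).
  { induction n as [|n IH].
    - split. intros H'; apply HA; apply A_sym; auto. exists s; auto.
    - apply Vs_step with (rho n); [apply (t_sym Htree); auto | exact IH | apply ray_adj; auto | ].
      intros [_ H1]. apply Hno. exists (S n); auto. }
  destruct (HE k) as [M HM].
  apply (Vs_both (Ha k) (HM M (le_n _)) (Hall M)).
Qed.

Definition UA rho := forall t, Ev rho (Vs t (p t)).

Lemma some_node : exists t : N, True.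
Proof. destruct (cover (r 0)) as [t _]. eauto. Qed.

Lemma UA_equiv rho sigma : is_ray adj rho -> is_ray adj sigma -> UA rho -> UA sigma -> equiv_rays adj rho sigma.
Proof.
  intros Hrho Hsig U1 U2. destruct some_node as [t0 _].
  set (cc := fun k => pp k t0).
  assert (Ha : forall k, tadj (cc k) (cc (S k))) by (intros k; unfold cc; rewrite pp_S'; apply p_adj).
  assert (Hn : forall k, cc (S (S k)) <> cc k) by (intros k; unfold cc; rewrite !pp_S'; apply ppp).
  destruct (MEET cc Hrho Ha Hn) as [B1 HB1]. { intros k. unfold cc. rewrite pp_S'. apply U1. }
  destruct (MEET cc Hsig Ha Hn) as [B2 HB2]. { intros k. unfold cc. rewrite pp_S'. apply U2. }
  apply EQ with cc (max B1 B2). apply (CHAIN_inj Htree cc Ha Hn).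
  intros k Hk. split; [apply HB1 | apply HB2]; lia.
Qed.

Lemma merge x y : exists i j, pp i x = pp j y.
Proof.
  destruct (t_conn Htree x y) as [l Hl]. induction Hl as [x|x y z l Hxy Hl IH].
  - exists 0, 0; auto.
  - destruct IH as (i & j & E). destruct (adj_dich Hxy) as [H|H].
    + exists (S i), j. rewrite pp_S, H. auto.
    + destruct i as [|i].
      * exists 0, (S j). simpl in E. rewrite pp_S', <- E. simpl. auto.
      * exists i, j. rewrite <- E, pp_S, H. auto.
Qed.

Lemma DT_up rho x : DT rho x -> DT rho (p x).
Proof.
  intros H. unfold DT. apply UP with x; auto. apply (t_sym Htree); apply p_adj.
  intros E. exact (ppp (eq_sym E)).
Qed.

Lemma DT_pp rho x k : DT rho x -> DT rho (pp k x).
Proof. intros H. induction k; auto. rewrite pp_S'. apply DT_up; auto. Qed.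

Lemma notUA_DT rho : is_ray adj rho -> ~ UA rho -> exists t, DT rho t.
Proof.
  intros Hrho HU. apply NNPP; intros Hno. apply HU. intros t.
  destruct (dirf_spec t Hrho) as [H1 H2].
  destruct (classic (dirf rho t = p t)) as [E|E]. rewrite <- E; auto.
  exfalso. apply Hno. exists t. unfold DT. eapply UP; eauto.
Qed.

Lemma two_down rho sigma : is_ray adj rho -> is_ray adj sigma -> ~ UA rho -> ~ UA sigma ->
  equiv_rays adj rho sigma.
Proof.
  intros Hrho Hsig U1 U2.
  destruct (notUA_DT Hrho U1) as [t1 D1]. destruct (notUA_DT Hsig U2) as [t2 D2].
  destruct (merge t1 t2) as (i & j & E).
  set (m := pp i t1).
  assert (Dm1 : DT rho m) by (apply DT_pp; auto).
  assert (Dm2 : DT sigma m) by (unfold m; rewrite E; apply DT_pp; auto).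
  set (d := fun k => Nat.iter k (dirf rho) m).
  set (e := fun k => Nat.iter k (dirf sigma) m).
  assert (Hd : forall k, DT rho (d k)).
  { induction k; simpl; auto. apply (DOWNSTEP Hrho IHk). }
  assert (He : forall k, DT sigma (e k)).
  { induction k; simpl; auto. apply (DOWNSTEP Hsig IHk). }
  assert (Hdp : forall k, p (d (S k)) = d k) by (intros k; apply (DOWNSTEP Hrho (Hd k))).
  assert (Hep : forall k, p (e (S k)) = e k) by (intros k; apply (DOWNSTEP Hsig (He k))).
  destruct (classic (exists k, d k = e k /\ d (S k) <> e (S k))) as [[k [E1 E2]]|Hno].
  - exfalso. apply (no_Brn (t := d k)).
    exists (d (S k)), (e (S k)), rho, sigma.
    destruct (DOWNSTEP Hrho (Hd k)) as (N1 & _ & _).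
    destruct (DOWNSTEP Hsig (He k)) as (N2 & _ & _).
    destruct (dirf_spec (d k) Hrho) as [A1 B1].
    destruct (dirf_spec (e k) Hsig) as [A2 B2].
    split; [exact Hrho|]. split; [exact Hsig|].
    split; [exact A1|]. split; [rewrite E1; exact A2|]. split; [exact E2|].
    split; [exact N1|]. split; [rewrite E1; exact N2|]. split; [exact B1| rewrite E1; exact B2].
  - assert (Hde : forall k, d k = e k).
    { induction k; auto. apply NNPP; intros H. apply Hno. exists k; auto. }
    assert (Ha : forall k, tadj (d k) (d (S k))) by (intros k; apply (dirf_spec (d k) Hrho)).
    assert (Hn : forall k, d (S (S k)) <> d k).
    { intros k E'. apply (ppp (t := d k)). transitivity (p (p (d (S (S k))))).
      rewrite E'; auto. rewrite (Hdp (S k)), (Hdp k); auto. }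
    destruct (MEET d Hrho Ha Hn) as [B1 HB1]. { intros k. apply (dirf_spec (d k) Hrho). }
    destruct (MEET d Hsig Ha Hn) as [B2 HB2].
    { intros k. rewrite !Hde. apply (dirf_spec (e k) Hsig). }
    apply EQ with d (max B1 B2). apply (CHAIN_inj Htree d Ha Hn).
    intros k Hk. split; [apply HB1 | apply HB2]; lia.
Qed.

Lemma final (R : nat -> nat -> V) : (forall i, is_ray adj (R i)) ->
  (forall i j, i <> j -> ~ equiv_rays adj (R i) (R j)) -> False.
Proof.
  intros HR Hne.
  assert (H : forall i j, i <> j -> UA (R i) -> UA (R j) -> False).
  { intros i j Hij U1 U2. apply (Hne i j Hij). apply UA_equiv; auto. }
  assert (H' : forall i j, i <> j -> ~ UA (R i) -> ~ UA (R j) -> False).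
  { intros i j Hij U1 U2. apply (Hne i j Hij). apply two_down; auto. }
  destruct (classic (UA (R 0))) as [U0|U0].
  - apply (H' 1 2); auto. intro; apply (H 0 1); auto. intro; apply (H 0 2); auto.
  - destruct (classic (UA (R 1))) as [U1|U1].
    + apply (H' 0 2); auto. intro; apply (H 1 2); auto.
    + apply (H' 0 1); auto.
Qed.

End Main.

Theorem lemma4p4 (V N : Type) (adj : V -> V -> Prop) (tadj : N -> N -> Prop)
  (X : N -> V -> Prop) :
  simple_graph adj -> graph_connected adj ->
  locally_finite adj -> quasi_transitive adj -> infinitely_many_ends adj ->
  is_tree_decomposition adj tadj X -> canonical_td adj tadj X ->
  bags_finite_cliques adj X -> unique_adhesion_edges tadj X ->
  has_aut_invariant_end adj ->
  forall (C : Type) (c : V -> C), proper_coloring adj c -> ~ periodic_coloring adj c.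
Proof.
  intros Hsg _ Hlf _ [R [HR Hne]] Htd (act & H1 & H2 & H3 & H4) Hb Hu (r & Hr & Hinv) C c Hc [l0 Hper].
  exact (final Hlf Htd act H1 H2 H3 H4 Hb Hu Hr Hinv Hc l0 Hper R HR Hne).
Qed.
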